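(* Let $p$ and $q$ be groupoid terms in a set of variables $X$. Then, with each $n_x$ denoting a suitable integer: (i) $p=q$ is in $\Sigma_{1,2,3}$ iff $[p]-[q]=\sum_{x\in X} n_x(\alpha+\beta-\gamma-1)x$ for some integers $n_x$; (ii) $p=q$ is in $\Sigma_{1,2,4}$ iff $[p]-[q]=\sum_{x\in X} n_x(\alpha-\beta+\gamma-1)x$ for some integers $n_x$; (iii) $p=q$ is in $\Sigma_{2,3,4}$ iff $[p]-[q]=\sum_{x\in X} n_x(\alpha+\beta+\gamma+1)x$ for some integers $n_x$.
   Context: Let $f_1(x,y)=x+y$, $f_2(x,y)=x-y$, $f_3(x,y)=-x+y$, $f_4(x,y)=-x-y$ on the integers $\mathbb{Z}$. For $K\subseteq\{1,2,3,4\}$, $\Sigma_K$ (written e.g. $\Sigma_{1,2,3}$) is the set of groupoid identities satisfied in $\mathbb{Z}$ by the operation $f_k$ for every $k\in K$. Let $\mathbf{KL}=\{1,\alpha,\beta,\gamma\}$ be the Klein 4-group ($\alpha^2=\beta^2=1$, $\alpha\beta=\gamma$). For a term $p$ in variables $X$, $[p]$ denotes the element of the free $\mathbb{Z}[\mathbf{KL}]$-module on $X$ obtained by evaluating $p$ with the product $uv$ interpreted as $\alpha u+\beta v$; thus $[p]=\sum_{x\in X} a_x x$ with $a_x\in\mathbb{N}[\mathbf{KL}]$. *)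

(* Defs.v *)
From HB Require Import structures.
From mathcomp Require Import all_boot all_order all_algebra.
Set Implicit Arguments. Unset Strict Implicit. Unset Printing Implicit Defensive.
Import Order.TTheory GRing.Theory Num.Theory.
Local Open Scope ring_scope.

Inductive term (X : Type) : Type :=
| Var of X
| Op of term X & term X.
Arguments Var {X} _.
Arguments Op {X} _ _.

Definition fop (k : nat) (x y : int) : int :=
  match k with
  | 1%N => x + y
  | 2%N => x - y
  | 3%N => - x + y
  | _ => - x - y
  end.

Fixpoint eval (X : Type) (f : int -> int -> int) (v : X -> int) (t : term X) : int :=
  match t with
  | Var x => v x
  | Op u w => f (eval f v u) (eval f v w)
  end.

Definition inSigma (X : Type) (K : seq nat) (p q : term X) : Prop :=
  forall k, k \in K -> forall v : X -> int, eval (fop k) v p = eval (fop k) v q.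

(* Klein four-group KL = bool * bool with componentwise xor:
   1 = (false,false), alpha = (true,false), beta = (false,true), gamma = (true,true). *)
Definition KL := (bool * bool)%type.
Definition kmul (g h : KL) : KL := (xorb g.1 h.1, xorb g.2 h.2).
Definition k1 : KL := (false, false).
Definition kalpha : KL := (true, false).
Definition kbeta : KL := (false, true).
Definition kgamma : KL := (true, true).

(* The group ring Z[KL], as finitely supported functions KL -> int. *)
Definition ZKL := {ffun KL -> int}.
Definition kdelta (g : KL) : ZKL := [ffun h => ((h == g) : nat)%:Z].
Definition zkl_mul (a b : ZKL) : ZKL :=
  [ffun g => \sum_(h : KL) a h * b (kmul h g)].

(* Coefficient of x in [p], element of the free Z[KL]-module on X,
   where [uv] = alpha [u] + beta [v]. *)
Fixpoint coef (X : eqType) (t : term X) (x : X) : ZKL :=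
  match t with
  | Var y => if y == x then kdelta k1 else 0
  | Op u w => zkl_mul (kdelta kalpha) (coef u x) + zkl_mul (kdelta kbeta) (coef w x)
  end.

(* Main.v *)
Require Import Defs.
From HB Require Import structures.
From mathcomp Require Import all_boot all_order all_algebra.
From mathcomp Require Import zify ring.
Import GRing.Theory.
Local Open Scope ring_scope.

Definition sa (k : nat) : int := match k with 1%N | 2%N => 1 | _ => -1 end.
Definition sb (k : nat) : int := match k with 1%N | 3%N => 1 | _ => -1 end.

Lemma fop_lin k x y : fop k x y = sa k * x + sb k * y.
Proof.
do 5!(case: k => [|k]; first by rewrite /fop /sa /sb ?mul1r ?mulN1r).
by rewrite /fop /sa /sb ?mul1r ?mulN1r.
Qed.

Definition chi (k : nat) (a : ZKL) : int :=
  a k1 + sa k * a kalpha + sb k * a kbeta + sa k * sb k * a kgamma.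

Lemma chiB k a b : chi k (a - b) = chi k a - chi k b.
Proof. rewrite /chi !ffunE /=; ring. Qed.

Lemma chiD k a b : chi k (a + b) = chi k a + chi k b.
Proof. rewrite /chi !ffunE /=; ring. Qed.

Lemma chi0 k : chi k 0 = 0.
Proof. by rewrite /chi !ffunE /= !mulr0 !addr0. Qed.

Lemma chi1 k : chi k (kdelta k1) = 1.
Proof. by rewrite /chi !ffunE /= !mulr0 !addr0. Qed.

Lemma kdelta_mul g a h : zkl_mul (kdelta g) a h = a (kmul g h).
Proof.
rewrite /zkl_mul ffunE (bigD1 g) //= big1 ?addr0.
  by rewrite ffunE eqxx mul1r.
by move=> i /negPf ne; rewrite ffunE ne mul0r.
Qed.

Lemma chi_alpha k a : chi k (zkl_mul (kdelta kalpha) a) = sa k * chi k a.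
Proof.
rewrite /chi !kdelta_mul /=.
by case: k => [|[|[|[|k]]]] /=; ring.
Qed.

Lemma chi_beta k a : chi k (zkl_mul (kdelta kbeta) a) = sb k * chi k a.
Proof.
rewrite /chi !kdelta_mul /=.
by case: k => [|[|[|[|k]]]] /=; ring.
Qed.

Lemma chi_coef (X : eqType) k (p : term X) x : chi k (coef p x) =
  match p with Var y => (y == x)%:R | Op u w => sa k * chi k (coef u x) + sb k * chi k (coef w x) end.
Proof.
case: p => [y|u w] /=.
  by case: eqP => _; rewrite ?chi1 ?chi0.
by rewrite chiD chi_alpha chi_beta.
Qed.

Lemma eval_ind (X : eqType) k (p : term X) x :
  eval (fop k) (fun y => ((y == x) : nat)%:Z) p = chi k (coef p x).
Proof.
elim: p => [y|u IHu w IHw]; rewrite chi_coef //=.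
by case: eqP.
by rewrite fop_lin IHu IHw.
Qed.

Fixpoint vars {X : Type} (t : term X) : seq X :=
  match t with Var y => [:: y] | Op u w => vars u ++ vars w end.

Lemma eval_sum (X : eqType) k v (p : term X) (L : seq X) :
  uniq L -> {subset vars p <= L} ->
  eval (fop k) v p = \sum_(x <- L) chi k (coef p x) * v x.
Proof.
move=> uL; elim: p => [y|u IHu w IHw] /= sub.
  have yL : y \in L by apply: sub; rewrite inE.
  rewrite (bigD1_seq y) //= eqxx chi1 mul1r big1 ?addr0 //.
  by move=> i /negPf ne; rewrite eq_sym ne chi0 mul0r.
rewrite fop_lin IHu ?IHw; last first.
- by move=> z zi; apply: sub; rewrite mem_cat zi.
- by move=> z zi; apply: sub; rewrite mem_cat zi orbT.
rewrite !big_distrr -big_split /=; apply: eq_bigr => i _.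
rewrite [chi k (coef (Op u w) i)]chi_coef; ring.
Qed.

Lemma sigma_iff (X : eqType) K (p q : term X) :
  inSigma K p q <-> forall x k, k \in K -> chi k (coef p x - coef q x) = 0.
Proof.
split.
  move=> H x k kK; rewrite chiB -!eval_ind (H k kK); ring.
move=> H k kK v.
pose L := undup (vars p ++ vars q).
have uL : uniq L by apply: undup_uniq.
rewrite (@eval_sum _ k v p L uL) ?(@eval_sum _ k v q L uL); last first.
- by move=> z zi; rewrite mem_undup mem_cat zi ?orbT.
- by move=> z zi; rewrite mem_undup mem_cat zi ?orbT.
apply/eqP; rewrite -subr_eq0 -sumrB; apply/eqP; apply: big1 => i _.
by rewrite -mulrBl -chiB H // mul0r.
Qed.

Lemma ffun_eqE (a b : ZKL) :
  (a = b) <-> [/\ a k1 = b k1, a kalpha = b kalpha, a kbeta = b kbeta & a kgamma = b kgamma].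
Proof.
split; first by move=> ->.
case=> h1 h2 h3 h4; apply/ffunP => -[[] []] //.
Qed.

Lemma solveA (d : ZKL) : chi 1 d = 0 -> chi 2 d = 0 -> chi 3 d = 0 ->
  d = (kdelta kalpha + kdelta kbeta - kdelta kgamma - kdelta k1) *~ (- d k1).
Proof.
rewrite /chi /= => h1 h2 h3; apply/ffun_eqE; rewrite !ffunMzE !ffunE /= !mulrzz.
split; lia.
Qed.

Lemma solveB (d : ZKL) : chi 1 d = 0 -> chi 2 d = 0 -> chi 4 d = 0 ->
  d = (kdelta kalpha - kdelta kbeta + kdelta kgamma - kdelta k1) *~ (- d k1).
Proof.
rewrite /chi /= => h1 h2 h3; apply/ffun_eqE; rewrite !ffunMzE !ffunE /= !mulrzz.
split; lia.
Qed.

Lemma solveC (d : ZKL) : chi 2 d = 0 -> chi 3 d = 0 -> chi 4 d = 0 ->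
  d = (kdelta kalpha + kdelta kbeta + kdelta kgamma + kdelta k1) *~ (d k1).
Proof.
rewrite /chi /= => h1 h2 h3; apply/ffun_eqE; rewrite !ffunMzE !ffunE /= !mulrzz.
split; lia.
Qed.

Theorem lemma2p1 (X : eqType) (p q : term X) :
  (inSigma [:: 1%N; 2%N; 3%N] p q <->
     exists n : X -> int, forall x : X,
       coef p x - coef q x
       = (kdelta kalpha + kdelta kbeta - kdelta kgamma - kdelta k1) *~ n x)
  /\
  (inSigma [:: 1%N; 2%N; 4%N] p q <->
     exists n : X -> int, forall x : X,
       coef p x - coef q x
       = (kdelta kalpha - kdelta kbeta + kdelta kgamma - kdelta k1) *~ n x)
  /\
  (inSigma [:: 2%N; 3%N; 4%N] p q <->
     exists n : X -> int, forall x : X,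
       coef p x - coef q x
       = (kdelta kalpha + kdelta kbeta + kdelta kgamma + kdelta k1) *~ n x).
Proof.
split; [|split]; rewrite sigma_iff; split.
- move=> H; exists (fun x => - (coef p x - coef q x) k1) => x.
  by apply: solveA; apply: H.
- case=> n H x k; rewrite !inE H /chi !ffunMzE !ffunE /= !mulrzz.
  by case/or3P => /eqP -> /=; lia.
- move=> H; exists (fun x => - (coef p x - coef q x) k1) => x.
  by apply: solveB; apply: H.
- case=> n H x k; rewrite !inE H /chi !ffunMzE !ffunE /= !mulrzz.
  by case/or3P => /eqP -> /=; lia.
- move=> H; exists (fun x => (coef p x - coef q x) k1) => x.
  by apply: solveC; apply: H.
- case=> n H x k; rewrite !inE H /chi !ffunMzE !ffunE /= !mulrzz.
  by case/or3P => /eqP -> /=; lia.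
Qed.
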